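(* For all $n\geq 1$, \[a_{2(2)}(n)=b_2(n)+b_2(n+1)-b_2(n+2).\]
   Context: For $\ell\ge 2$, an $\ell$-regular partition is a partition with no part divisible by $\ell$, and $b_\ell(n)$ is the number of $\ell$-regular partitions of $n$. $a_{m(\ell)}(n)$ is the number of $\ell$-regular partitions of $n$ in which the smallest part occurs at least $m$ times; here $\ell=2$, $m=2$. *)

(* Defs.v *)
From mathcomp Require Import all_boot.
Set Implicit Arguments. Unset Strict Implicit. Unset Printing Implicit Defensive.

Definition is_partition (n : nat) (s : seq nat) : bool :=
  [&& sorted geq s, all (fun x => 0 < x) s & sumn s == n].

(* Enumeration: all nonincreasing lists of positive parts, each <= k,
   summing to n (fuel f bounds recursion depth; f >= n suffices). *)
Fixpoint parts_le (f k n : nat) : seq (seq nat) :=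
  match f with
  | 0 => if n == 0 then [:: [::]] else [::]
  | f'.+1 =>
    if n == 0 then [:: [::]] else
    flatten [seq [seq (j.+1) :: p | p <- parts_le f' (j.+1) (n - j.+1)]
            | j <- iota 0 (minn k n)]
  end.

Definition partitions (n : nat) : seq (seq nat) := parts_le n n n.

Definition regular (ell : nat) (s : seq nat) : bool := all (fun x => ~~ (ell %| x)) s.

Definition b (ell n : nat) : nat := count (regular ell) (partitions n).

(* smallest part of a (nonempty, nonincreasing) partition is its last entry *)
Definition smallest_part (s : seq nat) : nat := last 0 s.

Definition a_reg (m ell n : nat) : nat :=
  count (fun s => regular ell s && (m <= count_mem (smallest_part s) s))
        (partitions n).

(* Main.v *)
Require Import Defs.
From mathcomp Require Import all_boot all_algebra.
From mathcomp Require Import zify.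

Lemma geq_tr : transitive geq.
Proof. by move=> a b c /= h1 h2; exact: leq_trans h2 h1. Qed.

Lemma le_sumn x s : x \in s -> x <= sumn s.
Proof.
elim: s => [|y s IH] //=; rewrite inE => /orP [/eqP ->|/IH]; lia.
Qed.

Lemma mem_nil0 k s :
  (s \in [:: [::]]) = [&& sorted geq s, all (fun x => 0 < x) s, sumn s == 0
                      & all (fun x => x <= k) s].
Proof.
case: s => [|x s] //=; rewrite inE /=.
by case: x => [|x] //=; rewrite !andbF.
Qed.

Lemma mem_parts_le f k n s : n <= f ->
  (s \in parts_le f k n) = [&& sorted geq s, all (fun x => 0 < x) s,
                              sumn s == n & all (fun x => x <= k) s].
Proof.
elim: f k n s => [|f IH] k n s Hn /=.
  have -> : n = 0 by lia.
  by rewrite eqxx (mem_nil0 k).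
case: (eqVneq n 0) => [->|nz]; first by rewrite (mem_nil0 k).
apply/flatten_mapP/idP.
  move=> [j]; rewrite mem_iota => jin /mapP [p]; rewrite IH; last by lia.
  move=> /and4P [sp pp sump allp] -> /=.
  rewrite path_sortedE; last exact: geq_tr.
  have -> : all (geq j.+1) p = all (fun x => x <= j.+1) p by [].
  rewrite sp pp allp /=.
  apply/and3P; split.
  - by move: sump => /eqP ->; lia.
  - lia.
  - apply: sub_all allp => x /=; lia.
case: s => [|x p] /=; first by rewrite eq_sym (negbTE nz) /=; case: (k); rewrite ?andbF.
rewrite path_sortedE; last exact: geq_tr.
move=> /and5P [/andP [ap sp] /andP [x0 pp] /eqP sump xk pk].
exists x.-1; first by rewrite mem_iota; lia.
apply/mapP; exists p; last by rewrite prednK.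
rewrite IH; last by lia.
rewrite sp pp prednK //=.
apply/andP; split; first by apply/eqP; lia.
by [].
Qed.

Lemma mem_partitions n s :
  (s \in partitions n) = [&& sorted geq s, all (fun x => 0 < x) s & sumn s == n].
Proof.
rewrite /partitions mem_parts_le //.
case: (sorted _ _) => //; case: (all _ _) => //=.
case: (eqVneq (sumn s) n) => //= <-.
by apply/allP => x /le_sumn.
Qed.

Lemma uniq_flat (L : nat -> seq (seq nat)) js :
  uniq js -> (forall j, uniq (L j)) ->
  uniq (flatten [seq [seq j.+1 :: p | p <- L j] | j <- js]).
Proof.
move=> + HL; elim: js => [|j js IH] //= /andP [jn ujs].
rewrite cat_uniq IH // andbT.
rewrite map_inj_uniq ?HL //; last by move=> ? ? [].
apply/hasPn => y /flatten_mapP [jp jpin /mapP [p _ ->]].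
apply/mapP => [[q _ [e _]]].
by move: jn; rewrite -e jpin.
Qed.

Lemma uniq_parts_le f k n : uniq (parts_le f k n).
Proof.
elim: f k n => [|f IH] k n /=; first by case: (n == 0).
case: (n == 0) => //.
apply: uniq_flat; first exact: iota_uniq.
by move=> j; apply: IH.
Qed.

Lemma uniq_partitions n : uniq (partitions n).
Proof. exact: uniq_parts_le. Qed.

Lemma count_bij (T : eqType) (L1 L2 : seq T) (P1 P2 : pred T) (f g : T -> T) :
  uniq L1 -> uniq L2 ->
  (forall x, x \in L1 -> P1 x -> [&& f x \in L2, P2 (f x) & g (f x) == x]) ->
  (forall y, y \in L2 -> P2 y -> [&& g y \in L1, P1 (g y) & f (g y) == y]) ->
  count P1 L1 = count P2 L2.
Proof.
move=> u1 u2 H1 H2.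
rewrite -!size_filter -(size_map f).
apply: perm_size; apply: uniq_perm.
- rewrite map_inj_in_uniq ?filter_uniq //.
  move=> x y; rewrite !mem_filter => /andP [px xin] /andP [py yin] e.
  have /and3P [_ _ /eqP <-] := H1 x xin px.
  have /and3P [_ _ /eqP <-] := H1 y yin py.
  by rewrite e.
- exact: filter_uniq.
move=> y; apply/mapP/idP.
  move=> [x]; rewrite mem_filter => /andP [px xin] ->.
  by have /and3P [a b _] := H1 x xin px; rewrite mem_filter a b.
rewrite mem_filter => /andP [py yin].
have /and3P [a b /eqP e] := H2 y yin py.
by exists (g y); rewrite // mem_filter a b.
Qed.

Lemma count_split (T : Type) (a c : pred T) s :
  count a s = count (fun x => a x && c x) s + count (fun x => a x && ~~ c x) s.
Proof.
elim: s => [|x s IH] //=; rewrite IH.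
by case: (a x); case: (c x) => /=; lia.
Qed.

Lemma count_rcons' (a : pred nat) s x : count a (rcons s x) = count a s + a x.
Proof. by rewrite -cats1 count_cat /= addn0. Qed.

Definition bl (s : seq nat) := take (size s).-1 s.

Lemma bl_rcons s x : bl (rcons s x) = s.
Proof. by rewrite /bl size_rcons -cats1 take_size_cat. Qed.

Lemma sorted_rcons_geq s x :
  sorted geq (rcons s x) = sorted geq s && all (fun y => x <= y) s.
Proof.
elim: s => [|y s IH] //=.
rewrite !path_sortedE; try exact: geq_tr.
rewrite all_rcons IH /=.
have -> : all (geq y) s = all (fun z => z <= y) s by [].
case: (x <= y); case: (all (fun z => z <= y) s); case: (sorted geq s);
  case: (all (fun y => x <= y) s) => //=.
Qed.

Lemma nonempty_part m s : 0 < m -> s \in partitions m -> s = rcons (bl s) (last 0 s).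
Proof.
move=> m0; case/lastP: s => [|s x]; first by rewrite mem_partitions /=; lia.
by rewrite bl_rcons last_rcons.
Qed.

Lemma part_rcons m s x :
  (rcons s x \in partitions m) =
  [&& sorted geq s, all (fun y => x <= y) s, 0 < x, all (fun x => 0 < x) s
    & sumn s + x == m].
Proof.
rewrite mem_partitions sorted_rcons_geq all_rcons sumn_rcons.
by case: (sorted _ _); case: (all _ _); case: (0 < x); case: (all _ _).
Qed.

Lemma reg_rcons s x : regular 2 (rcons s x) = ~~ (2 %| x) && regular 2 s.
Proof. by rewrite /regular all_rcons. Qed.

Lemma stepB n :
  count (fun s => regular 2 s && (last 0 s == 1)) (partitions n.+2) = b 2 n.+1.
Proof.
rewrite /b; symmetry.
apply: (@count_bij _ _ _ _ _ (fun s => rcons s 1) bl); try exact: uniq_partitions.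
  move=> s sin rs.
  rewrite bl_rcons eqxx last_rcons eqxx reg_rcons rs andbT andbT /=.
  move: sin; rewrite part_rcons mem_partitions => /and3P [-> -> /eqP ->] /=.
  by rewrite addn1 eqxx !andbT.
move=> s sin /andP [rs /eqP l1].
have e := @nonempty_part _ s (ltn0Sn _) sin.
rewrite e in sin rs *; move: sin rs; rewrite l1 bl_rcons reg_rcons part_rcons.
move=> /and5P [ss _ _ ps /eqP e'] /andP [_ rs'].
rewrite mem_partitions ss ps rs' eqxx /= andbT; apply/eqP; lia.
Qed.

Lemma stepC n : 0 < n ->
  count (fun s => regular 2 s && ~~ (last 0 s == 1)) (partitions n.+2) =
  count (fun s => regular 2 s && ~~ (2 <= count_mem (smallest_part s) s)) (partitions n).
Proof.
move=> n0; symmetry.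
apply: (@count_bij _ _ _ _ _ (fun s => rcons (bl s) (last 0 s).+2)
                  (fun s => rcons (bl s) (last 0 s - 2)));
  try exact: uniq_partitions.
  move=> s sin; have e := @nonempty_part _ s n0 sin; rewrite e in sin *.
  rewrite /smallest_part !bl_rcons !last_rcons.
  move: (bl s) (last 0 s) sin => s' x.
  rewrite !part_rcons !reg_rcons count_rcons' /= eqxx !subSS subn0 eqxx andbT.
  move=> /and5P [ss ax x0 ps /eqP sm] /andP [/andP [rx rs] c].
  have c0 : count_mem x s' = 0 by move: c; rewrite addn1 ltnS lt0n negbK => /eqP.
  have nx : x \notin s' by apply/count_memPn.
  rewrite ss ps rs /=.
  have -> : all [eta leq x.+2] s'.
    apply/allP => y ys; have := allP ax y ys.
    have : ~~ (2 %| y) by have := allP rs y ys.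
    have : y != x by apply/eqP => e'; move: nx; rewrite -e' ys.
    rewrite /=; lia.
  rewrite /=; apply/andP; split; first by apply/eqP; lia.
  lia.
move=> y yin /andP [ry l1]; have e := @nonempty_part _ y (ltn0Sn _) yin.
rewrite e in yin ry *.
rewrite /smallest_part !bl_rcons !last_rcons.
move: (bl y) (last 0 y) yin ry l1 => s' x.
rewrite !part_rcons !reg_rcons count_rcons' /= eqxx.
move=> /and5P [ss ax x0 ps /eqP sm] /andP [rx rs] l1.
have x3 : 3 <= x by lia.
have -> : count_mem (x - 2) s' = 0.
  rewrite (@eq_in_count _ _ pred0) ?count_pred0 // => z zs /=.
  have := allP ax z zs; rewrite /=; lia.
rewrite ss ps rs /=.
have -> : all [eta leq (x - 2)] s'.
  apply/allP => z zs; have := allP ax z zs; rewrite /=; lia.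
have -> : (x - 2).+2 = x by lia.
rewrite eqxx !andbT /=; apply/andP; split; first (apply/andP; split; first lia); last lia.
apply/eqP; lia.
Qed.

Lemma stepD n :
  b 2 n = a_reg 2 2 n +
  count (fun s => regular 2 s && ~~ (2 <= count_mem (smallest_part s) s)) (partitions n).
Proof. exact: count_split. Qed.

Lemma stepA n :
  b 2 n = count (fun s => regular 2 s && (last 0 s == 1)) (partitions n) +
          count (fun s => regular 2 s && ~~ (last 0 s == 1)) (partitions n).
Proof. exact: count_split. Qed.

Lemma main_nat n : 0 < n -> b 2 n.+2 + a_reg 2 2 n = b 2 n + b 2 n.+1.
Proof.
move=> n0; rewrite stepA stepB stepC // (stepD n); lia.
Qed.


Local Open Scope ring_scope.

Theorem theorem5p4 (n : nat) : (1 <= n)%N ->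
  (a_reg 2 2 n)%:Z = (b 2 n)%:Z + (b 2 n.+1)%:Z - (b 2 n.+2)%:Z.
Proof.
move=> n0; have := @main_nat n n0; lia.
Qed.
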